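(* Let $(D,D_{t'})$ be a proper pair (in the sense allowing contemporaneous effects, with $D$ a tailed directed graph on $V\cup W$ and $t'\geq 1$) and assume the $d$-separation Markov property holds in $D_{t'}$ for the time series with baseline variables $X$ with index sets $(V,W)$. Let $A,C\subseteq V\cup W$ and $B\subseteq V$ be pairwise disjoint. If $A\cap \mathrm{an}_\bullet(B)=\emptyset$ and $(\mathrm{an}^V_\bullet(B)\cap C)\cup B$ is $\delta$-separated from $A$ given $C\setminus \mathrm{an}^V_\bullet(B)$ in $D$, then $X^B$ is locally independent of $X^A$ given $X^C$ until time $t'$.
   Context: Time series with baseline variables: $V$, $W$ finite disjoint index sets; $X=\{X_t\}_{t\ge0}$ with $X_0$ a random vector indexed by $V\cup W$ and $X_t$ ($t\ge1$) indexed by $V$. $X_t^A$ is the subvector indexed by $A$; $\overline X_t^A=\{X_s^i:i\in A,s\le t\}$ (baseline variables only at $s=0$). Local independence: for pairwise disjoint $A,B,C\subseteq V\cup W$ with $B\subseteq V$, $X^B$ is locally independent of $X^A$ given $X^C$ until time $t'$ if for every $t=1,\dots,t'$, $\overline X^A_{t-1}$ and $X_t^B$ are conditionally independent given $\overline X^{B\cup C}_{t-1}$. Tailed directed graph: a graph on $V\cup W$ with directed edges $i\to j$ and tailed directed edges $i\bullet\!\!\to j$; $i\ast\!\!\to j$ means $i\to j$ or $i\bullet\!\!\to j$ (if $i\bullet\!\!\to j$ is present, $i\to j$ is omitted). Only baseline nodes have edges into baseline nodes, and these are tailed. $D^-$ is the DG with $i\to j$ iff $i\ast\!\!\to j$ in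 $D$. $\mathrm{an}_\bullet(B)$: nodes $k$ with a directed path $k\bullet\!\!\to\cdots\bullet\!\!\to j$, $j\in B$, of tailed edges only; $\mathrm{de}_\bullet(B)$: nodes reachable from $B$ by such paths; $\mathrm{pa}_\bullet(B)$: nodes $k$ with $k\bullet\!\!\to j$, $j\in B$; by convention these three sets exclude $B$. $\mathrm{an}^V_\bullet(B)=\mathrm{an}_\bullet(B)\cap V$. DG terminology: path = walk without repeated nodes; collider = non-endpoint node with both adjacent edges pointing into it; $\mathrm{an}(C)$ = nodes with a directed path to $C$ (excluding the endpoint itself), $\mathrm{an}^+(C)=\mathrm{an}(C)\cup C$. $\delta$-separation in a DG $G$: with $G^B$ obtained by deleting all edges $i\to j$ with $i\in B$, $B$ is $\delta$-separated from $A$ given $C$ if every path in $G^B$ between $A$ and $B$ contains a noncollider in $C$ or a collider not in $\mathrm{an}_G(C)\cup C$. In a tailed directed graph $D$, $\delta$-separation means $\delta$-separation in $D^-$. $d$-separation in a DAG: same condition on paths of the DAG, no deletion. Unrolling (contemporaneous): the unrolled version of tailed directed graph $D$ on $t'$ lags is the DAG $D_{t'}$ on $V^{t'}\cup W^{t'}$, $V^{t'}=\bigcup_{i\in V}\{\nu_0^i,\dots,\nu^i_{t'}\}$, $W^{t'}=\{\nu_0^i:i\in W\}$, with $\nu_s^i\to\nu_t^j$ if $s<t$ and $i\ast\!\!\to j$, and $\nu_t^i\to\nu_t^j$ if $i\bullet\!\!\to j$. Rolling: the rolled version of a DAG $D_{t'}$ on such nodes is the tailed directed graph with $i\ast\!\!\to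 j$ if $\nu_s^i\to\nu_t^j$ for some $s\le t$, and $i\bullet\!\!\to j$ iff $\nu_t^i\to\nu_t^j$ for some $t$. Standing assumption: if $\nu_t^i\to\nu_t^j$ is present then so is $\nu_s^i\to\nu_u^j$ for some $s<u$. $(D,D_{t'})$ is proper if $D$ is the rolled version of $D_{t'}$ or $D_{t'}$ is the unrolled version of $D$. Node $\nu_s^i$ represents $X_s^i$. The $d$-separation Markov property holds in $D_{t'}$ if $d$-separation of node sets $a,b$ by $c$ implies conditional independence of the corresponding variables given those of $c$. *)

(* Defs.v *)
From HB Require Import structures.
From mathcomp Require Import all_boot all_order all_algebra.
From mathcomp Require Import all_classical all_reals all_analysis.

Set Implicit Arguments.
Unset Strict Implicit.
Unset Printing Implicit Defensive.

Import Order.TTheory GRing.Theory Num.Theory.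
Local Open Scope classical_set_scope.
Local Open Scope ring_scope.

(** A walk from [x] is given by a list of steps [(dir, y)]; [dir = true]
    means the edge [prev -> y], [dir = false] means the edge [prev <- y]. *)
Fixpoint steps_ok (T : Type) (E : T -> T -> Prop) (x : T)
    (s : seq (bool * T)) : Prop :=
  match s with
  | [::] => True
  | (dir, y) :: s' => (if dir then E x y else E y x) /\ steps_ok E y s'
  end.

Definition walk_nodes (T : Type) (x : T) (s : seq (bool * T)) : seq T :=
  x :: map snd s.

Definition walk_end (T : Type) (x : T) (s : seq (bool * T)) : T :=
  last x (map snd s).

Definition is_path (T : eqType) (E : T -> T -> Prop) (x : T)
    (s : seq (bool * T)) : Prop :=
  steps_ok E x s /\ uniq (walk_nodes x s).

(** Non-endpoint nodes of the walk, each with a flag telling whether it is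
    a collider (both adjacent edges point into it). *)
Fixpoint walk_interior (T : Type) (s : seq (bool * T)) : seq (T * bool) :=
  match s with
  | (d1, y) :: (((d2, _) :: _) as s') => (y, d1 && ~~ d2) :: walk_interior s'
  | _ => [::]
  end.

Fixpoint dwalk (T : Type) (E : T -> T -> Prop) (x : T) (p : seq T) : Prop :=
  match p with
  | [::] => True
  | y :: p' => E x y /\ dwalk E y p'
  end.

(** an^+(C) = an(C) ∪ C : nodes with a directed path (possibly trivial) to C *)
Definition anc_plus (T : Type) (E : T -> T -> Prop) (C : T -> Prop) (x : T) :
  Prop := exists p : seq T, dwalk E x p /\ C (last x p).

Definition acyclic (T : Type) (E : T -> T -> Prop) : Prop :=
  forall (x : T) (p : seq T), p <> [::] -> dwalk E x p -> last x p <> x.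

Definition sep_gen (T : eqType) (Ep Ea : T -> T -> Prop)
    (A B C : T -> Prop) : Prop :=
  forall (x : T) (s : seq (bool * T)),
    is_path Ep x s -> A x -> B (walk_end x s) ->
    exists2 yc, yc \in walk_interior s &
      ((~~ yc.2 /\ C yc.1) \/ (yc.2 /\ ~ anc_plus Ea C yc.1)).

Definition dsep (T : eqType) (E : T -> T -> Prop) (a b c : T -> Prop) : Prop :=
  sep_gen E E a b c.

(** delta-separation in a DG G: B is delta-separated from A given C
    (paths are taken in G^B, ancestors in G). *)
Definition delta_sep (T : eqType) (G : T -> T -> Prop) (B A C : T -> Prop) :
  Prop := sep_gen (fun x y => G x y /\ ~ B x) G A B C.

(** A tailed directed graph is given by [arr i j] (meaning i *-> j, i.e. i -> j
    or i •-> j) and [tail i j] (meaning i •-> j).  Thus D^- has edge relation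
    [arr]. *)
Definition tailed_graph (I : finType) (W : {set I}) (arr tail : rel I) : Prop :=
  (forall i j, tail i j -> arr i j) /\
  (forall i j, arr i j -> j \in W -> i \in W /\ tail i j).

Definition an_tail (I : finType) (tail : rel I) (B : {set I}) (k : I) : Prop :=
  k \notin B /\ anc_plus (fun i j => tail i j) (fun j => j \in B) k.

Definition an_tail_V (I : finType) (V : {set I}) (tail : rel I) (B : {set I})
    (k : I) : Prop := k \in V /\ an_tail tail B k.

(* Unrolled DAGs: nodes nu_s^i are represented by pairs (i, s).          *)

Definition valid_node (I : finType) (W : {set I}) (t' : nat) (v : I * nat) :
  Prop := (v.2 <= t')%N /\ (v.1 \in W -> v.2 = 0%N).

Definition dag_on (I : finType) (W : {set I}) (t' : nat)
    (E : I * nat -> I * nat -> Prop) : Prop :=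
  (forall u v, E u v -> valid_node W t' u /\ valid_node W t' v) /\ acyclic E.

Definition unrolled (I : finType) (W : {set I}) (arr tail : rel I) (t' : nat)
    (E : I * nat -> I * nat -> Prop) : Prop :=
  forall u v, E u v <->
    valid_node W t' u /\ valid_node W t' v /\
    (((u.2 < v.2)%N /\ arr u.1 v.1) \/ (u.2 = v.2 /\ tail u.1 v.1)).

Definition rolled (I : finType) (W : {set I}) (arr tail : rel I) (t' : nat)
    (E : I * nat -> I * nat -> Prop) : Prop :=
  (forall u v, E u v -> (u.2 <= v.2)%N) /\
  (forall i j, arr i j <-> exists s u, (s <= u)%N /\ E (i, s) (j, u)) /\
  (forall i j, tail i j <-> exists u, E (i, u) (j, u)) /\
  (* standing assumption (for non-baseline targets j) *)
  (forall i j u, j \notin W -> E (i, u) (j, u) ->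
     exists s u', (s < u')%N /\ E (i, s) (j, u')).

Definition proper_pair (I : finType) (W : {set I}) (arr tail : rel I) (t' : nat)
    (E : I * nat -> I * nat -> Prop) : Prop :=
  rolled W arr tail t' E \/ unrolled W arr tail t' E.

Section Prob.
Context {d : measure_display} {Omega : measurableType d} {R : realType}.

Definition sigma_vars (I : Type) (X : I -> nat -> Omega -> R)
    (S : set (I * nat)) : set (set Omega) :=
  <<s [set F | exists v, S v /\
         exists Bo : set R, measurable Bo /\ F = X v.1 v.2 @^-1` Bo] >>.

(** Conditional independence of F1 and F2 given F3 (sigma-algebras):
    for every event A of F1, P(A | F2 ∨ F3) admits an F3-measurable version,
    i.e. there is an integrable F3-measurable g with
    P(A ∩ H) = ∫_H g dP for all H in sigma(F2 ∪ F3). *)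
Definition cond_indep (P : probability Omega R)
    (F1 F2 F3 : set (set Omega)) : Prop :=
  forall A, F1 A ->
    exists g : Omega -> R,
      (forall Bo : set R, measurable Bo -> F3 (g @^-1` Bo)) /\
      P.-integrable setT (EFin \o g) /\
      (forall H, <<s F2 `|` F3 >> H ->
         P (A `&` H) = (\int[P]_(x in H) (g x)%:E)%E).

Definition ci_vars (P : probability Omega R) (I : Type)
    (X : I -> nat -> Omega -> R) (a b c : set (I * nat)) : Prop :=
  cond_indep P (sigma_vars X a) (sigma_vars X b) (sigma_vars X c).

Definition ts_baseline (I : finType) (W : {set I})
    (X : I -> nat -> Omega -> R) : Prop :=
  forall i t, (i \in W -> t = 0%N) -> measurable_fun setT (X i t).

Definition dsep_markov (P : probability Omega R) (I : finType) (W : {set I})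
    (t' : nat) (E : I * nat -> I * nat -> Prop)
    (X : I -> nat -> Omega -> R) : Prop :=
  forall a b c : set (I * nat),
    a `<=` valid_node W t' -> b `<=` valid_node W t' ->
    c `<=` valid_node W t' ->
    a `&` b = set0 -> a `&` c = set0 -> b `&` c = set0 ->
    dsep (fun u v : (I * nat)%type => E u v) a b c -> ci_vars P X a b c.

Definition loc_indep (P : probability Omega R) (I : finType) (W : {set I})
    (X : I -> nat -> Omega -> R) (A B C : {set I}) (t' : nat) : Prop :=
  forall t, (1 <= t <= t')%N ->
    ci_vars P X
      [set v | v.1 \in A /\ (v.2 <= t.-1)%N /\ (v.1 \in W -> v.2 = 0%N)]
      [set v | v.1 \in B /\ v.2 = t]
      [set v | v.1 \in B :|: C /\ (v.2 <= t.-1)%N /\ (v.1 \in W -> v.2 = 0%N)].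

End Prob.

(* Main.v *)
Require Import Defs.
From HB Require Import structures.
From mathcomp Require Import all_boot all_order all_algebra.
From mathcomp Require Import all_classical all_reals all_analysis.
From Stdlib Require Import Classical.

Set Implicit Arguments. Unset Strict Implicit. Unset Printing Implicit Defensive.

Fixpoint ok_int (T : Type) (Q : T -> bool -> Prop) (s : seq (bool * T)) : Prop :=
  match s with
  | (d1, y) :: (((d2, _) :: _) as s') => Q y (d1 && ~~ d2) /\ ok_int Q s'
  | _ => True
  end.

Lemma ok_intP (T : eqType) (Q : T -> bool -> Prop) s :
  ok_int Q s <-> (forall yc, yc \in walk_interior s -> Q yc.1 yc.2).
Proof.
elim: s => [|[d1 y] s IH] //=.
case: s IH => [|[d2 z] s] IH //=.
split.
  move=> [Hq /IH H] yc; rewrite in_cons => /orP [/eqP -> //|]; exact: H.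
move=> H; split; first by apply: (H (y, d1 && ~~ d2)); rewrite mem_head.
by apply/IH => yc Hyc; apply: H; rewrite in_cons Hyc orbT.
Qed.

Lemma ok_int_tail (T : Type) (Q : T -> bool -> Prop) a s :
  ok_int Q (a :: s) -> ok_int Q s.
Proof. by case: a => d y; case: s => [|[d2 z] s] //= []. Qed.

Lemma ok_int_catr (T : Type) (Q : T -> bool -> Prop) p r :
  ok_int Q (p ++ r) -> ok_int Q r.
Proof. by elim: p => [|a p IH] //= /ok_int_tail. Qed.

Lemma ok_int_catl (T : Type) (Q : T -> bool -> Prop) p r :
  ok_int Q (p ++ r) -> ok_int Q p.
Proof.
elim: p => [|[d y] p IH] //=.
case: p IH => [|[d2 z] p] IH //= [H1 H2]; split=> //; exact: IH.
Qed.

Lemma ok_int_cat (T : Type) (Q : T -> bool -> Prop) p x y r :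
  ok_int Q (rcons p x ++ y :: r) <->
  ok_int Q (rcons p x) /\ Q x.2 (x.1 && ~~ y.1) /\ ok_int Q (y :: r).
Proof.
case: x => dx xx; case: y => dy yy.
elim: p => [|a p IH]; first by rewrite /=; tauto.
case: p IH => [|b p] IH.
  case: a => ?? /=; tauto.
case: a => ??; move: IH; case: b => ?? /=; tauto.
Qed.

Lemma ok_int_rcons (T : Type) (Q : T -> bool -> Prop) p x y :
  ok_int Q (rcons (rcons p x) y) <-> ok_int Q (rcons p x) /\ Q x.2 (x.1 && ~~ y.1).
Proof.
rewrite -cats1 ok_int_cat; case: y => ?? /=; tauto.
Qed.

Lemma steps_ok_cat (T : Type) (E : T -> T -> Prop) x p r :
  steps_ok E x (p ++ r) <-> steps_ok E x p /\ steps_ok E (walk_end x p) r.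
Proof.
elim: p x => [|[d y] p IH] x /=; first tauto.
rewrite IH /walk_end /=; tauto.
Qed.

Lemma walk_end_cat (T : Type) x (p r : seq (bool * T)) :
  walk_end x (p ++ r) = walk_end (walk_end x p) r.
Proof. by rewrite /walk_end map_cat last_cat. Qed.

Lemma walk_end_rcons (T : Type) x (p : seq (bool * T)) d y :
  walk_end x (rcons p (d, y)) = y.
Proof. by rewrite /walk_end map_rcons last_rcons. Qed.

Lemma steps_ok_rcons (T : Type) (E : T -> T -> Prop) x p d y :
  steps_ok E x (rcons p (d, y)) <->
  steps_ok E x p /\ (if d then E (walk_end x p) y else E y (walk_end x p)).
Proof. rewrite -cats1 steps_ok_cat /=; tauto. Qed.

Lemma mem_split (T : eqType) (x : T) (s : seq (bool * T)) :
  x \in map snd s -> exists q r, s = q ++ r /\ q <> [::] /\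
    forall y, walk_end y q = x.
Proof.
elim: s => [|[d y] s IH] //=; rewrite in_cons => /orP [/eqP ->|/IH [q [r [-> [Hq He]]]]].
  by exists [:: (d, y)], s.
exists ((d, y) :: q), r; split=> //; split=> // z.
by rewrite /walk_end /=; case: q Hq He => [|a q] // _ /(_ y); rewrite /walk_end.
Qed.

Lemma notuniq_split (T : eqType) x (s : seq (bool * T)) :
  ~~ uniq (walk_nodes x s) -> exists p q r, s = p ++ q ++ r /\ q <> [::] /\
    walk_end (walk_end x p) q = walk_end x p.
Proof.
elim: s x => [|[d y] s IH] x //=.
rewrite /walk_nodes /= negb_and negbK => /orP [].
  rewrite in_cons => /orP [/eqP <-|].
    by exists [::], [:: (d, x)], s.
  move=> /mem_split [q [r [-> [Hq He]]]].
  by exists [::], ((d, y) :: q), r; split=> //; split=> //; exact: (He y).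
move=> /IH [p [q [r [-> [Hq He]]]]].
by exists ((d, y) :: p), q, r; split=> //.
Qed.

Lemma anc_step (T : Type) (Ga : T -> T -> Prop) (S : T -> Prop) y z :
  Ga y z -> anc_plus Ga S z -> anc_plus Ga S y.
Proof. by move=> H [p [H1 H2]]; exists (z :: p). Qed.

Lemma seg_anc (T : Type) (G Ga : T -> T -> Prop) (Cs : T -> Prop) :
  (forall x y, G x y -> Ga x y) ->
  forall q y z, steps_ok G y ((true, z) :: q) ->
  ok_int (fun y col => (col -> anc_plus Ga Cs y) /\ (~~ col -> ~ Cs y))
    ((true, z) :: q) ->
  (last (true, z) q).1 = false -> anc_plus Ga Cs y.
Proof.
move=> HG; elim=> [|[d2 w] q IH] y z //= [Hyz Hs] [[Hc Hn] Hok] Hl.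
apply: (anc_step (HG _ _ Hyz)).
case: d2 Hs Hok Hl Hc Hn => [|] Hs Hok Hl Hc Hn; last exact: Hc.
exact: (IH z w Hs Hok Hl).
Qed.

Lemma no_good_walk (T : eqType) (G Ga : T -> T -> Prop) (A Bs Cs : T -> Prop) :
  (forall x y, G x y -> Ga x y) ->
  sep_gen G Ga A Bs Cs ->
  forall n x s, size s <= n -> steps_ok G x s ->
  ok_int (fun y col => (col -> anc_plus Ga Cs y) /\ (~~ col -> ~ Cs y)) s ->
  A x -> Bs (walk_end x s) -> False.
Proof.
move=> HG Hsep; elim=> [|n IH] x s Hn Hs Hok HA HB.
  case: s Hn Hs Hok HB => // _ _ _ HB.
  by have [yc] := Hsep x [::] (conj I isT) HA HB.
case: (boolP (uniq (walk_nodes x s))) => [Hu|/notuniq_split [p [q [r [Es [Hq He]]]]]].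
  have [[y c] /= Hin Hb] := Hsep x s (conj Hs Hu) HA HB.
  have := (proj1 (ok_intP _ _) Hok (y, c) Hin) => /= [[H1 H2]].
  by case: Hb => [[/H2]|[/H1]].
subst s.
move: Hs; rewrite steps_ok_cat steps_ok_cat He => [[Hp [Hq' Hr]]].
move: HB; rewrite !walk_end_cat He -walk_end_cat => HB.
apply: (IH x (p ++ r)) => //.
- move: Hn {IH}; rewrite !size_cat; case: q Hq He Hq' Hok => // ? ? _ _ _ _ /=.
  by rewrite addnS ltnS => /(leq_trans _)->; rewrite // leq_add2l leq_addl.
- by rewrite steps_ok_cat.
clear Hn IH.
case: r Hok Hr HB => [|[dr w] r] Hok Hr HB.
  by rewrite cats0; apply: ok_int_catl Hok.
case/lastP: p Hp Hok He Hq' HB Hr => [|p [d1 y]] Hp Hok He Hq' HB Hr.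
  by move/ok_int_catr: Hok; apply: ok_int_catr.
case: q Hq He Hq' Hok => [//|[dq z] q0] _ He Hq' Hok.
move/ok_int_cat: Hok => [Hokp [Hy Hok]].
move: Hy He Hq' Hok; rewrite walk_end_rcons -cat_cons => Hy He Hq' Hok.
case/lastP E0: ((dq, z) :: q0) He Hq' Hok => [//|q1 [dl yl]].
rewrite walk_end_rcons => Eyl Hq' /ok_int_cat [Hokq [Hyl Hokr]]; subst yl.
apply/ok_int_cat; split; first exact: Hokp.
split; last exact: Hokr.
clear HB Hr Hp Hokp Hokr.
move: Hy Hyl => /= [Hy1 Hy2] [Hyl1 Hyl2]; split.
  case: d1 dr Hy1 Hy2 Hyl1 Hyl2 => [] [] //= Hy1 Hy2 Hyl1 Hyl2 _.
  case: dq E0 Hy1 Hy2 Hq' => E0 Hy1 Hy2 Hq'; last exact: Hy1.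
  case: dl E0 Hyl1 Hyl2 Hokq Hq' => E0 Hyl1 Hyl2 Hokq Hq'; first exact: Hyl1.
  rewrite -E0 in Hq' Hokq.
  apply: (seg_anc HG Hq' Hokq).
  by have := congr1 (last (true, z)) E0; rewrite /= last_rcons => ->.
clear -Hy2 Hyl2.
case: d1 dr dq dl Hy2 Hyl2 => [] [] [] [] //= Hy2 Hyl2 _;
  (apply: Hy2 || apply: Hyl2) => //.
Qed.

Lemma first_hit (T : eqType) (R : T -> T -> Prop) (S : T -> Prop) y :
  anc_plus R S y -> exists p, dwalk R y p /\ S (last y p) /\
    (forall z, z \in belast y p -> ~ S z).
Proof.
move=> [p [Hp HS]]; elim: p y Hp HS => [|z p IH] y /=.
  by move=> _ HS; exists [::].
move=> [Hyz Hp] HS; case: (classic (S y)) => Hy.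
  by exists [::].
have [q [Hq [HSq Hb]]] := IH z Hp HS.
exists (z :: q); split=> //; split=> // w; rewrite /= in_cons => /orP [/eqP -> //|].
exact: Hb.
Qed.

Lemma ext_walk (T : eqType) (Ga : T -> T -> Prop) (Bs Cs : T -> Prop) p :
  forall y x0 sD,
  steps_ok (fun i j => Ga i j /\ ~ Bs i) x0 sD ->
  ok_int (fun y col => (col -> anc_plus Ga Cs y) /\ (~~ col -> ~ Cs y)) sD ->
  walk_end x0 sD = y -> dwalk Ga y p ->
  (forall z, z \in belast y p -> ~ Bs z /\ ~ Cs z) ->
  steps_ok (fun i j => Ga i j /\ ~ Bs i) x0 (sD ++ map (pair true) p) /\
  ok_int (fun y col => (col -> anc_plus Ga Cs y) /\ (~~ col -> ~ Cs y))
    (sD ++ map (pair true) p) /\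
  walk_end x0 (sD ++ map (pair true) p) = last y p.
Proof.
elim: p => [|z p IH] y x0 sD Hs Hok He Hd Hb.
  by rewrite cats0.
move: Hd => /= [Hyz Hd].
have [HyB HyC] : ~ Bs y /\ ~ Cs y by apply: Hb; rewrite /= mem_head.
rewrite -cat_rcons.
apply: IH => //.
- by apply/steps_ok_rcons; rewrite He.
- case/lastP: sD Hs Hok He => [|sD [d1 y1]] //= Hs Hok He.
  apply/ok_int_rcons; split=> //=.
  by move: He; rewrite walk_end_rcons => ->; rewrite andbF.
- by rewrite walk_end_rcons.
- by move=> w Hw; apply: Hb; rewrite /= in_cons Hw orbT.
Qed.

Lemma anc_proj (I : finType) (E : I * nat -> I * nat -> Prop) (arr : rel I)
  (c : set (I * nat)) (T0 : nat) (S : {set I}) :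
  (forall u v, E u v -> (u.2 <= v.2)%N) -> (forall u v, E u v -> arr u.1 v.1) ->
  (forall v, c v -> (v.2 <= T0)%N /\ v.1 \in S) ->
  forall u, anc_plus E c u ->
  (u.2 <= T0)%N /\ anc_plus (fun i j => arr i j) (fun i => i \in S) u.1.
Proof.
move=> Ht Ha Hc u [p [Hp HS]]; elim: p u Hp HS => [|z p IH] u /=.
  by move=> _ /Hc [H1 H2]; split=> //; exists [::].
move=> [Huz Hp] HS; have [Hz Haz] := IH z Hp HS.
split; first exact: leq_trans (Ht _ _ Huz) Hz.
exact: anc_step (Ha _ _ Huz) Haz.
Qed.

Lemma chain_anc (I : finType) (B : {set I}) (tail : rel I) (t : nat)
  (E : I * nat -> I * nat -> Prop) (c : set (I * nat)) :
  (forall u v, E u v -> (u.2 <= v.2)%N) ->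
  (forall u v, E u v -> u.2 = v.2 -> tail u.1 v.1) ->
  (forall v, anc_plus E c v -> (v.2 <= t.-1)%N) -> (1 <= t)%N ->
  forall s v, steps_ok E v s ->
  ok_int (fun y col => (col -> anc_plus E c y) /\ (~~ col -> ~ c y)) ((true, v) :: s) ->
  (t <= v.2)%N -> (walk_end v s).2 = t -> (walk_end v s).1 \in B ->
  anc_plus (fun i j => tail i j) (fun j => j \in B) v.1 /\ v.2 = t.
Proof.
move=> Ht Htl Hanc Ht1; elim=> [|[d2 w] s IH] v /=.
  by move=> _ _ _ -> HB; split=> //; exists [::].
move=> [Hvw Hs] [[Hc _] Hok] Hv He HB.
case: d2 Hvw Hs Hc Hok He HB => Hvw Hs Hc Hok He HB; last first.
  have := Hanc _ (Hc isT); move: Hv; case: t {IH He HB Hanc} Ht1 => // t _.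
  by rewrite /= => /leq_trans H /H; rewrite ltnn.
have Hw : (t <= w.2)%N by apply: leq_trans Hv (Ht _ _ Hvw).
have [Haw Hw2] := IH w Hs Hok Hw He HB.
have Hv2 : v.2 = t by apply/eqP; rewrite eqn_leq Hv -Hw2 Ht.
split=> //; apply: anc_step Haw; apply: Htl => //; by rewrite Hv2.
Qed.

Lemma chain_exit (I : finType) (W B : {set I}) (arr tail : rel I) (t' t : nat)
  (E : I * nat -> I * nat -> Prop) (c : set (I * nat)) (A Bs Cs : I -> Prop) :
  (forall u v, E u v -> valid_node W t' u /\ valid_node W t' v) ->
  (forall u v, E u v -> (u.2 <= v.2)%N) ->
  (forall u v, E u v -> arr u.1 v.1) ->
  (forall u v, E u v -> u.2 = v.2 -> tail u.1 v.1) ->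
  (forall v, anc_plus E c v -> (v.2 <= t.-1)%N) -> (1 <= t)%N ->
  (forall i, i \in B -> Bs i) ->
  (forall i, i \notin W -> i \notin B ->
     anc_plus (fun i j => tail i j) (fun j => j \in B) i -> ~ Cs i) ->
  (forall x s, steps_ok (fun i j => arr i j /\ ~ Bs i) x s ->
     ok_int (fun y col => (col -> anc_plus (fun i j => arr i j) Cs y) /\
                          (~~ col -> ~ Cs y)) s ->
     A x -> Bs (walk_end x s) -> False) ->
  forall s v x0 sD, steps_ok E v s ->
  ok_int (fun y col => (col -> anc_plus E c y) /\ (~~ col -> ~ c y)) ((true, v) :: s) ->
  (t <= v.2)%N -> v.1 \notin W -> (walk_end v s).2 = t -> (walk_end v s).1 \in B ->
  (exists p, sD = rcons p (true, v.1)) ->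
  steps_ok (fun i j => arr i j /\ ~ Bs i) x0 sD ->
  ok_int (fun y col => (col -> anc_plus (fun i j => arr i j) Cs y) /\
                       (~~ col -> ~ Cs y)) sD ->
  A x0 -> False.
Proof.
move=> Hv Ht Ha Htl Hanc Ht1 HB1 HCsV NG.
elim=> [|[d2 w] s IH] v x0 sD Hs Hok Htv HvW He HB [p Ep] HsD HokD HA.
  by apply: (NG x0 sD) => //; rewrite Ep walk_end_rcons; apply: HB1.
case: (classic (Bs v.1)) => HBv.
  by apply: (NG x0 sD) => //; rewrite Ep walk_end_rcons.
have [Hanv Hv2] := chain_anc Ht Htl Hanc Ht1 Hs Hok Htv He HB.
move: Hs Hok He HB => /= [Hvw Hs] [[Hc _] Hok] He HB.
case: d2 Hvw Hs Hc Hok He HB => Hvw Hs Hc Hok He HB; last first.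
  have := Hanc _ (Hc isT); move: Htv; case: t {IH He HB Hanc Hv2 Hanv} Ht1 => // t _.
  by rewrite /= => /leq_trans H /H; rewrite ltnn.
have Hw : (t <= w.2)%N by apply: leq_trans Htv (Ht _ _ Hvw).
apply: (IH w x0 (rcons sD (true, w.1))) => //.
- have [Hw1 Hw2] := proj2 (Hv _ _ Hvw).
  apply/negP => /Hw2 Hw0; move: Hw; rewrite Hw0; case: t Ht1 {IH He HB Hanc Htv Hv2 Hanv} => //.
- by exists sD.
- apply/steps_ok_rcons; split=> //; rewrite Ep walk_end_rcons; split=> //; exact: Ha.
- rewrite Ep; apply/ok_int_rcons; split; first by rewrite -Ep.
  split=> // _; apply: HCsV => //.
  by apply/negP => /HB1.
Qed.

Lemma anc_mono (T : Type) (R : T -> T -> Prop) (S1 S2 : T -> Prop) y :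
  (forall i, S1 i -> S2 i) -> anc_plus R S1 y -> anc_plus R S2 y.
Proof. by move=> H [p [Hp HS]]; exists p; split=> //; apply: H. Qed.

Lemma status (I : finType) (W B C : {set I}) (arr : rel I) (t' t : nat)
  (E : I * nat -> I * nat -> Prop) (c : set (I * nat)) (A Bs Cs : I -> Prop)
  (u : I * nat) (f : bool) x0 sD :
  (forall u v, E u v -> (u.2 <= v.2)%N) ->
  (forall u v, E u v -> arr u.1 v.1) ->
  (forall v, c v -> (v.2 <= t.-1)%N /\ v.1 \in B :|: C) ->
  (forall v, valid_node W t' v -> (v.2 <= t.-1)%N -> v.1 \in B :|: C -> c v) ->
  (forall i, i \in B :|: C -> Bs i \/ Cs i) -> (forall i, Cs i -> i \in C) ->
  (forall x s, steps_ok (fun i j => arr i j /\ ~ Bs i) x s ->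
     ok_int (fun y col => (col -> anc_plus (fun i j => arr i j) Cs y) /\
                          (~~ col -> ~ Cs y)) s ->
     A x -> Bs (walk_end x s) -> False) ->
  ((f -> anc_plus E c u) /\ (~~ f -> ~ c u)) ->
  valid_node W t' u -> (u.2 <= t.-1)%N -> ~ Bs u.1 ->
  steps_ok (fun i j => arr i j /\ ~ Bs i) x0 sD ->
  ok_int (fun y col => (col -> anc_plus (fun i j => arr i j) Cs y) /\
                       (~~ col -> ~ Cs y)) sD ->
  walk_end x0 sD = u.1 -> A x0 ->
  (f -> anc_plus (fun i j => arr i j) Cs u.1) /\ (~~ f -> ~ Cs u.1).
Proof.
move=> Ht Ha Hc1 Hc2 HBC HCs2 NG [Hf Hnf] Hvu Hu2 HuB Hs Hok He HA; split.
  move=> /Hf /(anc_proj Ht Ha Hc1) [_] /(anc_mono (S2 := fun i => Bs i \/ Cs i) HBC).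
  move=> /first_hit [p [Hp [HS Hb]]].
  case: (classic (Cs (last u.1 p))) => HC; first by exists p.
  have HBl : Bs (last u.1 p) by case: HS.
  have [H1 [H2 H3]] := ext_walk Hs Hok He Hp
    (fun z Hz => conj (fun h => Hb z Hz (or_introl h)) (fun h => Hb z Hz (or_intror h))).
  by exfalso; apply: (NG x0 _ H1 H2 HA); rewrite H3.
move=> /Hnf Hnc HCu; apply: Hnc; apply: Hc2 => //.
by rewrite !inE HCs2 ?orbT.
Qed.

Lemma main_ind (I : finType) (W B C : {set I}) (arr tail : rel I) (t' t : nat)
  (E : I * nat -> I * nat -> Prop) (c : set (I * nat)) (A Bs Cs : I -> Prop) :
  (forall u v, E u v -> valid_node W t' u /\ valid_node W t' v) ->
  (forall u v, E u v -> (u.2 <= v.2)%N) ->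
  (forall u v, E u v -> arr u.1 v.1) ->
  (forall u v, E u v -> u.2 = v.2 -> tail u.1 v.1) ->
  (1 <= t)%N ->
  (forall v, c v -> (v.2 <= t.-1)%N /\ v.1 \in B :|: C) ->
  (forall v, valid_node W t' v -> (v.2 <= t.-1)%N -> v.1 \in B :|: C -> c v) ->
  (forall i, i \in B -> Bs i) -> (forall i, Bs i -> i \in B :|: C) ->
  (forall i, i \in B :|: C -> Bs i \/ Cs i) -> (forall i, Cs i -> i \in C) ->
  (forall i, i \notin W -> i \notin B ->
     anc_plus (fun i j => tail i j) (fun j => j \in B) i -> ~ Cs i) ->
  (forall x s, steps_ok (fun i j => arr i j /\ ~ Bs i) x s ->
     ok_int (fun y col => (col -> anc_plus (fun i j => arr i j) Cs y) /\
                          (~~ col -> ~ Cs y)) s ->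
     A x -> Bs (walk_end x s) -> False) ->
  forall s u din x0 sD, steps_ok E u s ->
  ((sD = [::] /\ x0 = u.1 /\
     ok_int (fun y col => (col -> anc_plus E c y) /\ (~~ col -> ~ c y)) s) \/
   (exists p, sD = rcons p (din, u.1) /\
     ok_int (fun y col => (col -> anc_plus E c y) /\ (~~ col -> ~ c y))
       ((din, u) :: s))) ->
  steps_ok (fun i j => arr i j /\ ~ Bs i) x0 sD ->
  ok_int (fun y col => (col -> anc_plus (fun i j => arr i j) Cs y) /\
                       (~~ col -> ~ Cs y)) sD ->
  A x0 -> (u.2 <= t.-1)%N -> ~ Bs u.1 ->
  (walk_end u s).1 \in B -> (walk_end u s).2 = t -> False.
Proof.
move=> Hv Ht Ha Htl Ht1 Hc1 Hc2 HB1 HBs2 HBC HCs2 HCsV NG.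
have Hanc : forall v, anc_plus E c v -> (v.2 <= t.-1)%N.
  by move=> v /(anc_proj Ht Ha Hc1) [].
have Htt : (t.-1 < t)%N by case: t Ht1 {Hc1 Hc2 Hanc}.
elim=> [|[d v] s IH] u din x0 sD Hs Hinv HsD HokD HA Hu2 HuB HB He.
  by move: He Hu2; rewrite /walk_end /= => ->; rewrite leqNgt Htt.
have [Hvu Hvv] : valid_node W t' u /\ valid_node W t' v.
  by move: Hs; case: d {Hinv HB He IH} => [] [H _]; [exact: Hv H | have := Hv _ _ H; tauto].
have HeD : walk_end x0 sD = u.1.
  by case: Hinv => [[-> [-> _]]|[p [-> _]]] //; rewrite walk_end_rcons.
have HokU : ok_int (fun y col => (col -> anc_plus E c y) /\ (~~ col -> ~ c y))
    ((d, v) :: s) by case: Hinv => [[_ [_ H]]|[p [_ /ok_int_tail H]]].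
have HokD' : ok_int (fun y col => (col -> anc_plus (fun i j => arr i j) Cs y) /\
                       (~~ col -> ~ Cs y)) (rcons sD (d, v.1)).
  case: Hinv => [[-> _]|[p [Ep HU]]] //.
  rewrite Ep; apply/ok_int_rcons; split; first by rewrite -Ep.
  move: HU => /= [HQ _].
  apply: (status Ht Ha Hc1 Hc2 HBC HCs2 NG HQ Hvu Hu2 HuB HsD HokD HeD HA).
move: Hs => [Hedge Hs].
have Hvt : (v.2 <= t.-1)%N \/ (t <= v.2)%N.
  by case: (leqP t v.2) => H; [right|left; rewrite -ltnS (prednK Ht1)].
case: Hvt => Hvt.
  clear Hinv; case: s IH Hs HokU HB He => [|[d2 w] s] IH Hs HokU HB He.
    by move: He Hvt; rewrite /walk_end /= => ->; rewrite leqNgt Htt.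
  case: (classic (Bs v.1)) => HBv.
    have Hd : d && ~~ d2.
      apply/negPn/negP => Hf; move: HokU => /= [[_ /(_ Hf) Hnc] _]; apply: Hnc.
      by apply: Hc2 => //; apply: HBs2.
    move: Hd Hedge HokD' => /andP [-> _] Hedge HokD'.
    apply: (NG x0 (rcons sD (true, v.1))) => //; last by rewrite walk_end_rcons.
    by apply/steps_ok_rcons; split=> //; rewrite HeD; split=> //; apply: Ha.
  apply: (IH v d x0 (rcons sD (d, v.1))) => //.
  - by right; exists sD.
  - apply/steps_ok_rcons; split=> //; rewrite HeD.
    by case Edd: d Hedge => Hedge; split=> //; apply: Ha.
have Hd : d.
  case Edd: d Hedge => // /Ht Hvu2.
  by move: (leq_trans Hvt (leq_trans Hvu2 Hu2)); rewrite leqNgt Htt.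
move: Hd Hedge HokD' HokU HB He => -> Hedge HokD' HokU HB He.
apply: (chain_exit Hv Ht Ha Htl Hanc Ht1 HB1 HCsV NG Hs HokU Hvt _ He HB
   (ex_intro _ sD erefl) _ HokD' HA) => //.
- apply/negP => /(proj2 Hvv) Hv0; move: Hvt; rewrite Hv0 leqn0 => /eqP Ht0.
  by move: Ht1; rewrite Ht0.
- by apply/steps_ok_rcons; split=> //; rewrite HeD; split=> //; apply: Ha.
Qed.

Unset Implicit Arguments.

Theorem theorem1 (I : finType) (V W : {set I}) (arr tail : rel I) (t' : nat)
  (E : I * nat -> I * nat -> Prop)
  (d : measure_display) (Omega : measurableType d) (R : realType)
  (P : probability Omega R) (X : I -> nat -> Omega -> R)
  (A B C : {set I}) :
  [disjoint V & W] -> V :|: W = [set: I] ->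
  tailed_graph W arr tail ->
  (1 <= t')%N ->
  dag_on W t' E ->
  proper_pair W arr tail t' E ->
  ts_baseline W X ->
  dsep_markov P W t' E X ->
  [disjoint A & B] -> [disjoint A & C] -> [disjoint B & C] -> B \subset V ->
  (forall i, i \in A -> ~ an_tail tail B i) ->
  delta_sep (fun i j : I => arr i j)
    (fun i => (an_tail_V V tail B i /\ i \in C) \/ i \in B)
    (fun i => i \in A)
    (fun i => i \in C /\ ~ an_tail_V V tail B i) ->
  loc_indep P W X A B C t'.
Proof.
move=> HVW HVWc [Htl1 Htl2] Ht'1 [Hv _] Hpp _ Hmark HAB HAC HBC HBV _ Hdelta.
have HEt : forall u v, E u v -> (u.2 <= v.2)%N.
  case: Hpp => [[H _]|H] // u v /H [_ [_ [[/ltnW]|[->]]]] //.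
have HEa : forall u v, E u v -> arr u.1 v.1.
  case: Hpp => [[Ht_ [Harr _]]|H] [i s] [j u] Huv /=.
    by apply/Harr; exists s, u; split=> //; exact: (Ht_ _ _ Huv).
  by move/H: Huv => [_ [_ [[_ ?]|[_ /Htl1 ?]]]].
have HEtl : forall u v, E u v -> u.2 = v.2 -> tail u.1 v.1.
  case: Hpp => [[_ [_ [Htl _]]]|H] [i s] [j u] Huv /= Heq.
    by apply Htl; exists u; subst s.
  move/H: Huv => [_ [_ [[/= Hlt _]|[_ ->]]]] //.
  by move: Hlt; rewrite Heq ltnn.
move=> t /andP [Ht1 Htt'].
have Htp : (t.-1 <= t')%N by apply: leq_trans (leq_pred t) Htt'.
have Htt : (t.-1 < t)%N by rewrite prednK.
apply: Hmark.
- by move=> [i s] /= [_ [H1 H2]]; split=> //; apply: leq_trans H1 Htp.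
- move=> [i s] /= [H1 ->]; split=> // /= HiW.
  have HiV : i \in V by apply: (fintype.subsetP HBV).
  by move: (disjointFr HVW HiV); rewrite HiW.
- by move=> [i s] /= [_ [H1 H2]]; split=> //; apply: leq_trans H1 Htp.
- rewrite -subset0 => [[i s]] /= [[_ [H _]] [_ Hs]].
  by move: H; rewrite Hs leqNgt Htt.
- rewrite -subset0 => [[i s]] /= [[Hi _] [Hi' _]].
  move: Hi'; rewrite !inE (disjointFr HAB Hi) (disjointFr HAC Hi) //.
- rewrite -subset0 => [[i s]] /= [[_ Hs] [_ [H _]]].
  by move: H; rewrite Hs leqNgt Htt.
move=> x s [Hs _] Hxa Hxb.
apply: NNPP => Hn.
set Bs := (fun i => (an_tail_V V tail B i /\ i \in C) \/ i \in B).
set Cs := (fun i => i \in C /\ ~ an_tail_V V tail B i).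
pose c := [set v : I * nat | v.1 \in B :|: C /\ (v.2 <= t.-1)%N /\ (v.1 \in W -> v.2 = 0%N)]%classic.
have HokU : ok_int (fun y col => (col -> anc_plus E c y) /\ (~~ col -> ~ c y)) s.
  apply/ok_intP => [[y col]] Hin /=; split.
    move=> Hc; apply: NNPP => Ha; apply: Hn; exists (y, col) => //; right; split=> //.
  move=> Hc Hcy; apply: Hn; exists (y, col) => //; left; split=> //.
have NG : forall x s, steps_ok (fun i j => arr i j /\ ~ Bs i) x s ->
     ok_int (fun y col => (col -> anc_plus (fun i j => arr i j) Cs y) /\
                          (~~ col -> ~ Cs y)) s ->
     (x \in A) -> Bs (walk_end x s) -> False.
  move=> x0 s0; apply: (no_good_walk (n := size s0) _ Hdelta) => //.
  by move=> ? ? [].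
case: Hxa => HxA [Hx2 _].
apply: (@main_ind I W B C arr tail t' t E c (fun i => i \in A) Bs Cs
   Hv HEt HEa HEtl Ht1 _ _ _ _ _ _ _ NG s x true x.1 [::] Hs
   (or_introl (conj erefl (conj erefl HokU))) Logic.I Logic.I HxA Hx2).
- by move=> v [H1 [H2 _]].
- by move=> v [_ H] H1 H2; split.
- by move=> i Hi; right.
- move=> i [[_ H]|H]; rewrite !inE H ?orbT //.
- move=> i; rewrite !inE => /orP [H|H]; first by left; right.
  by case: (classic (an_tail_V V tail B i)) => Ht; [left; left|right].
- by move=> i [].
- move=> i HiW HiB Hanc [_ []]; split.
    have : i \in V :|: W by rewrite HVWc inE.
    by rewrite inE (negbTE HiW) orbF.
  by split.
- move=> [[_ H]|H].
    by move: (disjointFr HAC HxA); rewrite H.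
  by move: (disjointFr HAB HxA); rewrite H.
- by case: Hxb.
- by case: Hxb.
Qed.
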